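(* If a CSS code $(H_X,H_Z)$ is phantom, then for every CSS logical basis $(L_X,L_Z)$ of that code and every ordered pair $(a,b)\in[k]^2$ with $a\ne b$, there exists a permutation $\pi\in S_n$ that implements $I_k+E_{ab}$ in the basis $(L_X,L_Z)$.
   Context: Conventions. All arithmetic is over $\mathbb F_2$; vectors are row vectors; $|v|$ is the Hamming weight; $\mathrm{rs}(M)$ is the row space of $M$ and $\ker M=\{v: Mv^T=0\}$; $E_{ab}\in\mathbb F_2^{k\times k}$ is the matrix unit with a single $1$ in position $(a,b)$; $A^{-T}=(A^{-1})^T$. A CSS code on $n$ qubits is specified by $H_X\in\mathbb F_2^{r_X\times n}$, $H_Z\in\mathbb F_2^{r_Z\times n}$ with $H_XH_Z^T=0$; it has $k=n-\operatorname{rank}H_X-\operatorname{rank}H_Z$ logical qubits, $X$-distance $d_X=\min\{|v|:v\in\ker H_Z\setminus\mathrm{rs}(H_X)\}$, $Z$-distance $d_Z=\min\{|v|:v\in\ker H_X\setminus\mathrm{rs}(H_Z)\}$, and distance $d=\min(d_X,d_Z)$. A CSS logical basis is a pair $L_X,L_Z\in\mathbb F_2^{k\times n}$ with rows of $L_X$ in $\ker H_Z$, rows of $L_Z$ in $\ker H_X$, and $L_XL_Z^T=I_k$. For a permutation $\pi\in S_n$ with permutation matrix $P$ (so $v\mapsto vP$ permutes coordinates) and $A\in GL(k,\mathbb F_2)$, $\pi$ implements the logical CNOT circuit $A$ in the basis $(L_X,L_Z)$ if $\mathrm{rs}(H_XP)=\mathrm{rs}(H_X)$, $\mathrm{rs}(H_ZP)=\mathrm{rs}(H_Z)$,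 every row of $L_XP-AL_X$ lies in $\mathrm{rs}(H_X)$, and every row of $L_ZP-A^{-T}L_Z$ lies in $\mathrm{rs}(H_Z)$. The logical $\mathrm{CNOT}_{ab}$ ($a\neq b$) corresponds to $A=I_k+E_{ab}$. The CSS code is phantom if there is a CSS logical basis in which, for every ordered pair $(a,b)\in[k]^2$ with $a\neq b$, some permutation implements $I_k+E_{ab}$. *)

(* Defs.v *)
From mathcomp Require Import all_boot all_algebra all_fingroup.
Set Implicit Arguments. Unset Strict Implicit. Unset Printing Implicit Defensive.
Import GRing.Theory.
Local Open Scope ring_scope.

(* All matrices are over F_2 = 'F_2; vectors are rows; the permutation matrix
   of s : 'S_n is perm_mx s and v |-> v *m perm_mx s permutes coordinates. *)

Section CSS.
Variables (rX rZ n : nat).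
Implicit Types (HX : 'M['F_2]_(rX, n)) (HZ : 'M['F_2]_(rZ, n)).

Definition css_code HX HZ : Prop := HX *m HZ^T = 0.

Definition css_k HX HZ : nat := (n - \rank HX - \rank HZ)%N.

Definition css_logical_basis HX HZ (LX LZ : 'M['F_2]_(css_k HX HZ, n)) : Prop :=
  [/\ LX *m HZ^T = 0, LZ *m HX^T = 0 & LX *m LZ^T = 1%:M].

Definition cnot_mx (k : nat) (a b : 'I_k) : 'M['F_2]_k := 1%:M + delta_mx a b.

Definition implements HX HZ (LX LZ : 'M['F_2]_(css_k HX HZ, n))
    (s : 'S_n) (A : 'M['F_2]_(css_k HX HZ)) : Prop :=
  let P := perm_mx s in
  [/\ (HX *m P == HX)%MS, (HZ *m P == HZ)%MS,
      (LX *m P - A *m LX <= HX)%MS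
    & (LZ *m P - (invmx A)^T *m LZ <= HZ)%MS].

Definition phantom_code HX HZ : Prop :=
  exists LX LZ : 'M['F_2]_(css_k HX HZ, n),
    css_logical_basis LX LZ /\
    forall a b : 'I_(css_k HX HZ), a != b ->
      exists s : 'S_n, implements LX LZ s (cnot_mx a b).

End CSS.

(* Main.v *)
Require Import Defs.
From mathcomp Require Import all_boot all_algebra all_fingroup.
From mathcomp Require Import ring zify.
Set Implicit Arguments. Unset Strict Implicit. Unset Printing Implicit Defensive.
Import GRing.Theory.
Local Open Scope ring_scope.

Lemma F2c (x : 'F_2) : x = 0 \/ x = 1.
Proof. case: x => [[|[|//]]] /= Hx; [left|right]; exact: val_inj. Qed.
Lemma F2a : (1 + 1 : 'F_2) = 0. Proof. exact: val_inj. Qed.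
Lemma F2n0 (x : 'F_2) : x != 0 -> x = 1.
Proof. by case: (F2c x) => ->. Qed.
Lemma F2dbls (x : 'F_2) : x + x = 0.
Proof. by case: (F2c x) => ->; rewrite ?addr0 ?F2a. Qed.
Lemma F2dbl m n (A : 'M['F_2]_(m,n)) : A + A = 0.
Proof. by rewrite -{1}[A]scale1r -{2}[A]scale1r -scalerDl F2a scale0r. Qed.

Lemma swap_id (R : comRingType) (o a b c d : R) : b + b = 0 ->
  o + (a+b+(c+d)) = o + c + (b + d) + (b + a + b).
Proof. move=> h; rewrite -[LHS]addr0 -h. ring. Qed.

Section Comb.
Variable k : nat.
Variable G : 'M['F_2]_k -> Prop.
Hypothesis G1 : G 1%:M.
Hypothesis GM : forall A B, G A -> G B -> G (A *m B).
Hypothesis Gc : forall i j : 'I_k, i != j -> G (1%:M + delta_mx i j).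

Definition T (u : 'cV['F_2]_k) (w : 'rV['F_2]_k) : 'M_k := 1%:M + u *m w.

Lemma TL1 u1 u2 w : w *m u2 = 0 -> T (u1 + u2) w = T u1 w *m T u2 w.
Proof.
move=> h; rewrite /T mulmxDr !mulmxDl !mul1mx !mulmx1.
by rewrite mulmxA -(mulmxA u1 w u2) h mulmx0 mul0mx addr0 addrA.
Qed.

Lemma TL2 u w1 w2 : w1 *m u = 0 -> T u (w1 + w2) = T u w1 *m T u w2.
Proof.
move=> h; rewrite /T mulmxDr !mulmxDl !mul1mx ?mulmx1.
rewrite mulmxDr mulmx1 mulmxA -(mulmxA u w1 u) h mulmx0 mul0mx addr0.
by rewrite addrA addrAC.
Qed.

Lemma T0w w : T 0 w = 1%:M. Proof. by rewrite /T mul0mx addr0. Qed.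
Lemma Tu0 u : T u 0 = 1%:M. Proof. by rewrite /T mulmx0 addr0. Qed.

Definition supc (u : 'cV['F_2]_k) := [set l | u l 0 != 0].
Definition supr (w : 'rV['F_2]_k) := [set l | w 0 l != 0].

Lemma rowmul (j : 'I_k) (u : 'cV['F_2]_k) :
  delta_mx 0 j *m u = (u j 0)%:M.
Proof.
rewrite -rowE; apply/matrixP => r c; rewrite (ord1 r) (ord1 c) !mxE eqxx //.
Qed.

Lemma mx11_0 (A : 'M['F_2]_1) : A 0 0 = 0 -> A = 0.
Proof. by move=> h; apply/matrixP => r c; rewrite (ord1 r) (ord1 c) h mxE. Qed.

Lemma Ce (i : 'I_k) (w : 'rV['F_2]_k) : w 0 i = 0 -> G (T (delta_mx i 0) w).
Proof.
move: {2}#|supr w| (leqnn #|supr w|) => m; elim: m w => [|m IH] w.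
  rewrite leqn0 => /eqP/cards0_eq h _.
  have -> : w = 0.
    apply/matrixP => r c; rewrite (ord1 r) mxE.
    apply/eqP/negPn/negP => hc. have : c \in supr w by rewrite inE. by rewrite h inE.
  by rewrite Tu0.
move=> hm hi.
case: (altP (w =P 0)) => [->|/matrix0Pn [r [j hj]]]; first by rewrite Tu0.
rewrite (ord1 r) in hj.
have hji : j != i by apply: contraNneq hj => ->; rewrite hi.
have -> : w = delta_mx 0 j + (w - delta_mx 0 j) by rewrite addrC subrK.
rewrite TL2; last by rewrite mul_delta_mx_0.
apply: GM; first by rewrite /T mul_delta_mx; apply: Gc; rewrite eq_sym.
apply: IH; last by rewrite !mxE hi eqxx eq_sym (negbTE hji) subr0.
rewrite -ltnS; apply: leq_trans hm; apply: proper_card; apply/properP; split.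
  apply/subsetP => l; rewrite !inE !mxE eqxx /=; have [->|hlj] := eqVneq l j; first by rewrite hj.
  by rewrite subr0.
by exists j; rewrite !inE ?hj // !mxE !eqxx /= (F2n0 hj) subrr eqxx.
Qed.

Lemma disj_mul (u : 'cV['F_2]_k) (w : 'rV['F_2]_k) :
  (forall l, u l 0 != 0 -> w 0 l = 0) -> w *m u = 0.
Proof.
move=> h; apply: mx11_0; rewrite mxE; apply: big1 => l _.
by case: (F2c (u l 0)) => hl; rewrite hl ?mulr0 // h ?hl ?mul0r // oner_neq0.
Qed.

Lemma Cd (u : 'cV['F_2]_k) (w : 'rV['F_2]_k) :
  (forall l, u l 0 != 0 -> w 0 l = 0) -> G (T u w).
Proof.
move: {2}#|supc u| (leqnn #|supc u|) => m; elim: m u => [|m IH] u.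
  rewrite leqn0 => /eqP/cards0_eq h _.
  have -> : u = 0.
    apply/matrixP => r c; rewrite (ord1 c) mxE.
    apply/eqP/negPn/negP => hc. have : r \in supc u by rewrite inE. by rewrite h inE.
  by rewrite T0w.
move=> hm hd.
case: (altP (u =P 0)) => [->|/matrix0Pn [i [r hi]]]; first by rewrite T0w.
rewrite (ord1 r) in hi.
have -> : u = delta_mx i 0 + (u - delta_mx i 0) by rewrite addrC subrK.
have hd' : forall l, (u - delta_mx i 0) l 0 != 0 -> w 0 l = 0.
  move=> l; rewrite !mxE eqxx andbT; have [->|hli] := eqVneq l i.
    by rewrite (F2n0 hi) subrr eqxx.
  by rewrite subr0; apply: hd.
rewrite TL1; last exact: disj_mul.
apply: GM; first by apply: Ce; apply: hd.
apply: IH hd'.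
rewrite -ltnS; apply: leq_trans hm; apply: proper_card; apply/properP; split.
  apply/subsetP => l; rewrite !inE !mxE eqxx andbT; have [->|hlj] := eqVneq l i; first by rewrite hi.
  by rewrite subr0.
by exists i; rewrite !inE ?hi // !mxE !eqxx /= (F2n0 hi) subrr eqxx.
Qed.

Lemma Dsw (i j : 'I_k) : i != j ->
  G (T (delta_mx i 0 + delta_mx j 0) (delta_mx 0 i + delta_mx 0 j)).
Proof.
move=> hij.
have hji : j != i by rewrite eq_sym.
have -> : T (delta_mx i 0 + delta_mx j 0) (delta_mx 0 i + delta_mx 0 j) =
  (1%:M + delta_mx i j) *m (1%:M + delta_mx j i) *m (1%:M + delta_mx i j).
  rewrite /T !mulmxDl !mulmxDr !mul1mx !mulmx1 !mul_delta_mx.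
  rewrite !mulmxDl !mul_delta_mx !mul_delta_mx_0 //.
  rewrite !mul1mx add0r; apply/matrixP => r c; rewrite !mxE; apply: swap_id.
  exact: F2dbls.
by apply: GM; [apply: GM|]; apply: Gc.
Qed.

Lemma Tmain (u : 'cV['F_2]_k) (w : 'rV['F_2]_k) : w *m u = 0 -> G (T u w).
Proof.
move: {2}#|supr w| (leqnn #|supr w|) => m; elim: m w => [|m IH] w.
  rewrite leqn0 => /eqP/cards0_eq h _.
  have -> : w = 0.
    apply/matrixP => r c; rewrite (ord1 r) mxE.
    apply/eqP/negPn/negP => hc. have : c \in supr w by rewrite inE. by rewrite h inE.
  by rewrite Tu0.
move=> hm hwu.
case: (altP (w =P 0)) => [->|/matrix0Pn [r [j hj]]]; first by rewrite Tu0.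
rewrite (ord1 r) in hj.
case: (boolP [exists j, (w 0 j != 0) && (u j 0 == 0)]).
  case/existsP => j0 /andP [hj0 /eqP hu0].
  have hdj : forall l, u l 0 != 0 -> (delta_mx 0 j0 : 'rV['F_2]_k) 0 l = 0.
    move=> l hl; rewrite mxE eqxx /=; have [hlj|//] := eqVneq l j0.
    by move: hl; rewrite hlj hu0 eqxx.
  have -> : w = delta_mx 0 j0 + (w - delta_mx 0 j0) by rewrite addrC subrK.
  rewrite TL2; last exact: disj_mul.
  apply: GM; first exact: Cd.
  apply: IH; last by rewrite mulmxBl hwu disj_mul // subrr.
  rewrite -ltnS; apply: leq_trans hm; apply: proper_card; apply/properP; split.
    apply/subsetP => l; rewrite !inE !mxE eqxx /=; have [->|hlj] := eqVneq l j0; first by rewrite hj0.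
    by rewrite subr0.
  by exists j0; rewrite !inE ?hj0 // !mxE !eqxx /= (F2n0 hj0) subrr eqxx.
rewrite negb_exists => /forallP hall.
have hsub : forall l, w 0 l != 0 -> u l 0 = 1.
  move=> l hl; move: (hall l); rewrite hl /= => hu; exact: F2n0.
case: (boolP [exists l, (l != j) && (w 0 l != 0)]); last first.
  rewrite negb_exists => /forallP hw.
  have ew : w = delta_mx 0 j.
    apply/matrixP => r' c; rewrite (ord1 r') !mxE eqxx /=.
    have [->|hcj] := eqVneq c j; first exact: F2n0.
    by move: (hw c); rewrite hcj /= negbK => /eqP.
  move: hwu; rewrite ew rowmul (hsub _ hj) => /matrixP /(_ 0 0).
  by rewrite !mxE eqxx /= => /eqP; rewrite oner_eq0.
case/existsP => l /andP [hlj hl].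
set f : 'rV['F_2]_k := delta_mx 0 j + delta_mx 0 l.
set e : 'cV['F_2]_k := delta_mx j 0 + delta_mx l 0.
have fE : forall l', f 0 l' = (l' == j)%:R + (l' == l)%:R.
  by move=> l'; rewrite !mxE eqxx.
have eE : forall l', e l' 0 = (l' == j)%:R + (l' == l)%:R.
  by move=> l'; rewrite !mxE !andbT.
have hfu : f *m u = 0.
  by rewrite mulmxDl !rowmul (hsub _ hj) (hsub _ hl) F2dbl.
have hD : G (T e f) by apply: Dsw; rewrite eq_sym.
clearbody f e.
have -> : w = f + (w - f) by rewrite addrC subrK.
rewrite TL2 //.
apply: GM; last first.
  apply: IH; last by rewrite mulmxBl hwu hfu subrr.
  rewrite -ltnS; apply: leq_trans hm; apply: proper_card; apply/properP; split.
    apply/subsetP => l'; rewrite !inE !mxE fE.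
    have [->|hl'j] := eqVneq l' j; first by rewrite hj.
    have [->|hl'l] := eqVneq l' l; first by rewrite hl.
    by rewrite addr0 subr0.
  exists j; rewrite !inE ?hj // !mxE fE eqxx [j == l]eq_sym (negbTE hlj) addr0 (F2n0 hj).
  by rewrite subrr eqxx.
have -> : u = e + (u - e) by rewrite addrC subrK.
have hd : forall l', (u - e) l' 0 != 0 -> f 0 l' = 0.
  move=> l'; rewrite !mxE eE fE.
  have [->|hl'j] := eqVneq l' j.
    by rewrite [j == l]eq_sym (negbTE hlj) addr0 (hsub _ hj) subrr eqxx.
  have [->|hl'l] := eqVneq l' l.
    by rewrite (hsub _ hl) add0r subrr eqxx.
  by rewrite addr0.
rewrite TL1; last exact: disj_mul.
by apply: GM; last exact: Cd.
Qed.

End Comb.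
Lemma subB_sub (F : fieldType) m r n (A B : 'M[F]_(m,n)) (C : 'M[F]_(r,n)) :
  (A <= C)%MS -> (B <= C)%MS -> (A - B <= C)%MS.
Proof. by move=> hA hB; apply: addmx_sub hA _; rewrite eqmx_opp. Qed.

Lemma transp (F : fieldType) (k n r : nat) (H : 'M[F]_(r,n)) (P : 'M_n)
  (L L0 : 'M_(k,n)) (X A0 A1 : 'M_k) :
  (H *m P <= H)%MS -> (L - X *m L0 <= H)%MS -> (L0 *m P - A0 *m L0 <= H)%MS ->
  A1 *m X = X *m A0 -> (L *m P - A1 *m L <= H)%MS.
Proof.
move=> hP hY h0 hA.
set Y := L - X *m L0 in hY *.
have eL : L = X *m L0 + Y by rewrite /Y addrC subrK.
clearbody Y.
have -> : L *m P - A1 *m L = X *m (L0 *m P - A0 *m L0) + (Y *m P - A1 *m Y).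
  rewrite eL mulmxDl mulmxDr mulmxBr !mulmxA hA.
  by rewrite opprD addrACA.
apply: addmx_sub; first exact: mulmx_sub.
apply: subB_sub; last exact: mulmx_sub.
exact: submx_trans (submxMr P hY) hP.
Qed.

Lemma compL (F : fieldType) (k n r : nat) (H : 'M[F]_(r,n)) (P1 P2 : 'M_n)
  (L : 'M_(k,n)) (A1 A2 : 'M_k) :
  (H *m P2 <= H)%MS -> (L *m P1 - A1 *m L <= H)%MS -> (L *m P2 - A2 *m L <= H)%MS ->
  (L *m (P1 *m P2) - (A1 *m A2) *m L <= H)%MS.
Proof.
move=> hP h1 h2.
have -> : L *m (P1 *m P2) - (A1 *m A2) *m L =
          (L *m P1 - A1 *m L) *m P2 + A1 *m (L *m P2 - A2 *m L).
  by rewrite mulmxBl mulmxBr !mulmxA addrA subrK.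
apply: addmx_sub; last exact: mulmx_sub.
exact: submx_trans (submxMr P2 h1) hP.
Qed.

Lemma invmxM' (R : comUnitRingType) k (A B : 'M[R]_k) :
  A \in unitmx -> B \in unitmx -> invmx (A *m B) = invmx B *m invmx A.
Proof.
move=> uA uB.
have uAB : A *m B \in unitmx by rewrite unitmx_mul uA uB.
rewrite -[RHS]mul1mx -(mulVmx uAB) -!mulmxA (mulmxA B) mulmxV // mul1mx.
by rewrite mulmxV // mulmx1.
Qed.

Lemma span_decomp (F : fieldType) (k r1 r2 n m : nat) (H1 : 'M[F]_(r1,n))
  (H2 : 'M[F]_(r2,n)) (L1 L2 : 'M[F]_(k,n)) (L : 'M[F]_(m,n)) :
  H1 *m H2^T = 0 -> L1 *m H2^T = 0 -> L2 *m H1^T = 0 -> L1 *m L2^T = 1%:M ->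
  (0 < k)%N -> k = (n - \rank H1 - \rank H2)%N -> L *m H2^T = 0 ->
  exists B M, L = B *m L1 + M *m H1.
Proof.
move=> h12 hL1 hL2 hLL kpos hk hL.
have hcap : (L1 :&: H1)%MS = 0.
  have /submxP [c ec] := capmxSl L1 H1.
  have /submxP [d ed] := capmxSr L1 H1.
  have e1 : (L1 :&: H1)%MS *m L2^T = c by rewrite {1}ec -mulmxA hLL mulmx1.
  have e2 : (L1 :&: H1)%MS *m L2^T = 0.
    by rewrite {1}ed -mulmxA -(trmxK H1) -trmx_mul hL2 trmx0 mulmx0.
  by rewrite ec -e1 e2 mul0mx.
have rL1 : \rank L1 = k.
  apply/eqP; rewrite eqn_leq rank_leq_row /=.
  by rewrite -{1}(mxrank1 F k) -hLL mxrankM_maxl.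
have rS : \rank (L1 + H1)%MS = (k + \rank H1)%N.
  by have := mxrank_sum_cap L1 H1; rewrite hcap mxrank0 addn0 rL1.
have hsub : ((L1 + H1)%MS <= kermx H2^T)%MS.
  by rewrite addsmx_sub; apply/andP; split; apply/sub_kermxP.
have rK : \rank (kermx H2^T) = (n - \rank H2)%N by rewrite mxrank_ker mxrank_tr.
have hsup : (kermx H2^T <= (L1 + H1)%MS)%MS.
  rewrite -(mxrank_leqif_sup hsub).2 rS rK.
  apply/eqP; lia.
have : (L <= col_mx L1 H1)%MS.
  rewrite -addsmxE; apply: submx_trans hsup; exact/sub_kermxP.
case/submxP => D ->.
exists (lsubmx D), (rsubmx D).
by rewrite -{1}[D]hsubmxK mul_row_col.
Qed.

Lemma trmx_eq0 (R : Type) m n (A : 'M[R]_(m,n)) B : A^T = B^T -> A = B.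
Proof. by move=> h; rewrite -(trmxK A) h trmxK. Qed.

Theorem mainTheorem6 (rX rZ n : nat)
    (HX : 'M['F_2]_(rX, n)) (HZ : 'M['F_2]_(rZ, n)) :
  css_code HX HZ ->
  phantom_code HX HZ ->
  forall LX LZ : 'M['F_2]_(css_k HX HZ, n),
    css_logical_basis LX LZ ->
    forall a b : 'I_(css_k HX HZ), a != b ->
      exists s : 'S_n, implements LX LZ s (cnot_mx a b).
Proof.
move=> hcss [LX0 [LZ0 [[hX0 hZ0 hXZ0] hcnot]]] LX LZ [hX hZ hXZ] a b hab.
have kpos : (0 < css_k HX HZ)%N by apply: leq_ltn_trans (ltn_ord a).
have hk : css_k HX HZ = (n - \rank HX - \rank HZ)%N by [].
have hk' : css_k HX HZ = (n - \rank HZ - \rank HX)%N by rewrite hk subnAC.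
have hZX : HZ *m HX^T = 0.
  by apply: trmx_eq0; rewrite trmx_mul trmxK trmx0; exact: hcss.
have hZX0 : LZ0 *m LX0^T = 1%:M.
  by apply: trmx_eq0; rewrite trmx_mul trmxK trmx1.
have [B1 [M1 eX]] := span_decomp hcss hX0 hZ0 hXZ0 kpos hk hX.
have [C [N eZ]] := span_decomp hZX hZ0 hX0 hZX0 kpos hk' hZ.
have hBC : B1 *m C^T = 1%:M.
  have e1 : LZ *m LX^T = C *m B1^T.
    rewrite eZ mulmxDl -!mulmxA.
    have -> : LZ0 *m LX^T = B1^T.
      apply: trmx_eq0; rewrite trmx_mul trmxK eX mulmxDl -!mulmxA hXZ0 mulmx1.
      have hXZt : HX *m LZ0^T = 0 by apply: trmx_eq0; rewrite trmx_mul trmxK trmx0.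
      by rewrite hXZt mulmx0 addr0 trmxK.
    have -> : HZ *m LX^T = 0 by apply: trmx_eq0; rewrite trmx_mul trmxK hX trmx0.
    by rewrite mulmx0 addr0.
  by rewrite -(trmxK B1) -trmx_mul -e1 trmx_mul trmxK hXZ.
have uB : B1 \in unitmx by case: (mulmx1_unit hBC).
have hC : C = (invmx B1)^T.
  by apply: trmx_eq0; rewrite trmxK -[C^T](mulKmx uB) hBC mulmx1.
pose G (A : 'M['F_2]_(css_k HX HZ)) := A \in unitmx /\ exists s, implements LX0 LZ0 s A.
have G1 : G 1%:M.
  split; first exact: unitmx1.
  exists 1%g; rewrite /implements perm_mx1 !mulmx1 !mul1mx invmx1 trmx1 mul1mx !subrr.
  by split; rewrite ?sub0mx //; apply/eqmxP.
have GM : forall A1 A2, G A1 -> G A2 -> G (A1 *m A2).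
  move=> A1 A2 [u1 [s1 [h1X h1Z h1LX h1LZ]]] [u2 [s2 [h2X h2Z h2LX h2LZ]]].
  split; first by rewrite unitmx_mul u1 u2.
  have hP2X : (HX *m perm_mx s2 <= HX)%MS by rewrite (eqmxP h2X).
  have hP2Z : (HZ *m perm_mx s2 <= HZ)%MS by rewrite (eqmxP h2Z).
  exists (s1 * s2)%g; rewrite /implements perm_mxM; split.
  - apply/eqmxP; rewrite mulmxA; exact: eqmx_trans (eqmxMr _ (eqmxP h1X)) (eqmxP h2X).
  - apply/eqmxP; rewrite mulmxA; exact: eqmx_trans (eqmxMr _ (eqmxP h1Z)) (eqmxP h2Z).
  - exact: (compL hP2X h1LX h2LX).
  - rewrite (invmxM' u1 u2) trmx_mul; exact: (compL hP2Z h1LZ h2LZ).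
have cnot_sq : forall i j : 'I_(css_k HX HZ), i != j ->
    cnot_mx i j *m cnot_mx i j = 1%:M.
  move=> i j hij; rewrite /cnot_mx mulmxDl !mulmxDr !mul1mx mulmx1.
  by rewrite mul_delta_mx_0 1?eq_sym // addr0 -addrA F2dbl addr0.
have uc : forall i j : 'I_(css_k HX HZ), i != j -> cnot_mx i j \in unitmx.
  by move=> i j hij; case: (mulmx1_unit (cnot_sq i j hij)).
have Gc : forall i j : 'I_(css_k HX HZ), i != j -> G (1%:M + delta_mx i j).
  by move=> i j hij; split; [exact: uc | exact: hcnot].
set A0 := invmx B1 *m cnot_mx a b *m B1.
have GA0 : G A0.
  have -> : A0 = T (invmx B1 *m delta_mx a 0) (delta_mx 0 b *m B1).
    rewrite /A0 /T /cnot_mx mulmxDr mulmx1 mulmxDl mulVmx //.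
    by rewrite -(mul_delta_mx (0 : 'I_1)) !mulmxA.
  apply: Tmain G1 GM Gc _ _ _.
  by rewrite mulmxA mulmxK // mul_delta_mx_0 // eq_sym.
case: GA0 => uA0 [s [hsX hsZ hsLX hsLZ]].
exists s; split => //.
- have hPX : (HX *m perm_mx s <= HX)%MS by rewrite (eqmxP hsX).
  apply: (transp (X := B1) hPX _ hsLX).
    by rewrite eX addrC addKr submxMl.
  by rewrite /A0 !mulmxA mulmxV // mul1mx.
- have hPZ : (HZ *m perm_mx s <= HZ)%MS by rewrite (eqmxP hsZ).
  apply: (transp (X := (invmx B1)^T) hPZ _ hsLZ).
    by rewrite eZ hC addrC addKr submxMl.
  rewrite -!trmx_mul; congr trmx.
  have uBi : invmx B1 \in unitmx by rewrite unitmx_inv.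
  rewrite /A0 invmxM' ?unitmx_mul ?uBi ?uc // invmxM' ?uc // invmxK.
  by rewrite !mulmxA mulmxK.
Qed.
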